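(* Let $H:\omega\to\omega$, let $\sigma\in{}^{<\omega}\omega$ with $|\sigma|=m$, let $n\in\omega$, and let $T\subseteq{}^{<\omega}H$ be a finite tree which is $H\restriction(m+2n)$-full-branching above $\sigma$. Let $C_1,C_2$ be a partition of the set of leaves of $T$. Then at least one of the following holds: (i) the tree consisting of the nodes of $T$ comparable with some element of $C_1$ is $H\restriction(m+n)$-full-branching above $\sigma$; (ii) there exists $\tau\succ\sigma$ with $|\tau|=m+n$ such that the tree consisting of the nodes of $T$ comparable with some element of $C_2$ is $H\restriction(m+2n)$-full-branching above $\tau$.
   Context: A tree is a set of finite strings closed under prefixes; a leaf is a node with no proper extension in the tree. ${}^{<\omega}H$ is the tree of strings $\rho$ with $\rho(i)<H(i)$ for all $i<|\rho|$. For $f:\omega\to\omega$, $f<H$ means $f(i)<H(i)$ for all $i$. For a string $\sigma$ and $N>|\sigma|$, a tree $T$ is $H\restriction N$-full-branching above $\sigma$ if for every $f<H$ with $\sigma\prec f$ we have $f\restriction N\in T$. *)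

(* Defs.v *)
From mathcomp Require Import all_boot.
Set Implicit Arguments. Unset Strict Implicit. Unset Printing Implicit Defensive.

(* Finite strings are [seq nat]; a set of strings is a predicate [seq nat -> Prop]. *)

(* s is an initial segment of t (non-strict) : mathcomp's [prefix s t]. *)
Definition proper_prefix (s t : seq nat) : Prop := prefix s t /\ size s < size t.

Definition is_tree (T : seq nat -> Prop) : Prop :=
  forall s t, prefix s t -> T t -> T s.

Definition finite_set (T : seq nat -> Prop) : Prop :=
  exists l : seq (seq nat), forall s, T s <-> s \in l.

Definition sub_H_tree (H : nat -> nat) (T : seq nat -> Prop) : Prop :=
  forall s, T s -> forall i, i < size s -> nth 0 s i < H i.

Definition leaf (T : seq nat -> Prop) (s : seq nat) : Prop :=
  T s /\ forall t, T t -> ~ proper_prefix s t.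

Definition restr (f : nat -> nat) (N : nat) : seq nat := mkseq f N.

Definition below (f H : nat -> nat) : Prop := forall i, f i < H i.

Definition init_seg (s : seq nat) (f : nat -> nat) : Prop := restr f (size s) = s.

Definition full_branching (H : nat -> nat) (N : nat) (T : seq nat -> Prop)
  (sigma : seq nat) : Prop :=
  forall f, below f H -> init_seg sigma f -> T (restr f N).

Definition comparable_subtree (T C : seq nat -> Prop) : seq nat -> Prop :=
  fun s => T s /\ exists c, C c /\ (prefix s c \/ prefix c s).

(* Main.v *)
Require Import Defs.
From mathcomp Require Import all_boot.
From Stdlib Require Import Classical.
From mathcomp Require Import zify.

Lemma restr_prefix (f : nat -> nat) a b : a <= b -> prefix (restr f a) (restr f b).
Proof.
move=> ab; rewrite /restr /mkseq -(subnKC ab) iotaD map_cat; exact: prefix_prefix.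
Qed.

Lemma list_bound (l : seq (seq nat)) : exists N, forall t, t \in l -> size t <= N.
Proof.
elim: l => [|x l [N HN]]; first by exists 0.
exists (maxn (size x) N) => t; rewrite inE => /orP [/eqP -> | /HN]; first exact: leq_maxl.
move=> h; exact: (leq_trans h (leq_maxr _ _)).
Qed.

Lemma leaf_above (T : seq nat -> Prop) : finite_set T ->
  forall s, T s -> exists l, leaf T l /\ prefix s l.
Proof.
move=> [l Hl] s Ts.
have [N HN] := list_bound l.
have HT : forall t, T t -> size t <= N by move=> t /Hl /HN.
suff: forall d s, T s -> N - size s <= d -> exists l, leaf T l /\ prefix s l.
  by move=> /(_ _ s Ts (leqnn _)).
elim=> [|d IH] s0 Ts0 hd.
- exists s0; split; last exact: prefix_refl.
  split => // t Tt [_ hlt]; have := HT _ Tt; lia.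
- destruct (classic (exists t, T t /\ proper_prefix s0 t)) as [[t [Tt [pt st]]]|nt].
  + have hd' : N - size t <= d by have := HT _ Tt; lia.
    have [l0 [lf pl]] := IH t Tt hd'.
    exists l0; split => //; exact: prefix_trans pt pl.
  + exists s0; split; last exact: prefix_refl.
    split => // t Tt pt; apply: nt; by exists t.
Qed.

Theorem mainTheorem9 (H : nat -> nat) (sigma : seq nat) (m n : nat)
  (T : seq nat -> Prop) (C1 C2 : seq nat -> Prop) :
  size sigma = m ->
  is_tree T -> finite_set T -> sub_H_tree H T ->
  full_branching H (m + 2 * n) T sigma ->
  (forall s, leaf T s <-> (C1 s \/ C2 s)) ->
  (forall s, ~ (C1 s /\ C2 s)) ->
  full_branching H (m + n) (comparable_subtree T C1) sigma \/
  (exists tau : seq nat, prefix sigma tau /\ size tau = m + n /\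
     full_branching H (m + 2 * n) (comparable_subtree T C2) tau).
Proof.
move=> hm tree fin subH fb hleaf hdisj.
destruct (classic (exists tau : seq nat, prefix sigma tau /\ size tau = m + n /\
     full_branching H (m + 2 * n) (comparable_subtree T C2) tau)) as [ex|nex].
  by right.
left => f bf isf.
set tau := restr f (m + n).
have ptau : prefix sigma tau.
  rewrite -isf hm; apply: restr_prefix; exact: leq_addr.
have stau : size tau = m + n by rewrite size_mkseq.
have : ~ full_branching H (m + 2 * n) (comparable_subtree T C2) tau.
  by move=> h; apply: nex; exists tau.
move=> /not_all_ex_not [g hg].
have [bg hg'] := imply_to_and _ _ hg.
have [isg ng] := imply_to_and _ _ hg'.
have isg_s : init_seg sigma g.
  move: ptau; rewrite prefixE hm => /eqP <-.
  rewrite /init_seg size_take stau.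
  have -> : (if m < m + n then m else m + n) = m by case: ifP => //; lia.
  rewrite -isg stau /restr /mkseq -map_take take_iota.
  by rewrite (minn_idPl (leq_addr _ _)).
have Tg := fb g bg isg_s.
have [l [lf pl]] := @leaf_above T fin _ Tg.
have hpt : prefix tau (restr g (m + 2 * n)).
  rewrite -isg stau; apply: restr_prefix; rewrite leq_add2l leq_pmull //.
have C1l : C1 l.
  case: (proj1 (hleaf l) lf) => // C2l; exfalso; apply: ng; split => //.
  by exists l; split => //; left.
split.
  exact: tree hpt Tg.
by exists l; split => //; left; exact: prefix_trans hpt pl.
Qed.
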